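(* Let $k\ge 2$, let $U$ be any rotation of a binary de Bruijn cycle of order $k$, and let $w_{\mathrm{lin}}=U\,U[0..k-2]$ (a word of length $2^k+k-1$). Then the size of a smallest suffixient set for $w_{\mathrm{lin}}\$$ is $2^k+1$.
   Context: A binary de Bruijn cycle of order $k$ is a cyclic word $C$ of length $2^k$ over $\{0,1\}$ such that every word of $\{0,1\}^k$ occurs exactly once as a cyclic length-$k$ window of $C$. Strings are $0$-indexed; $w[i..j]$ is the substring from $i$ to $j$ inclusive. $\$$ is an end-marker not in $\{0,1\}$, occurring once at the end. For a string $v$ (over $\{0,1,\$\}$), a substring $x$ (possibly empty) is right-maximal if $xa$ and $xb$ are substrings of $v$ for two distinct symbols $a\ne b$; these words $xa$ are the right-extensions of $v$. A set $S$ of positions of $v$ is suffixient for $v$ if every right-extension of $v$ is a suffix of $v[0..j]$ for some $j\in S$. *)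

(* Defs.v *)
From mathcomp Require Import all_boot.
Set Implicit Arguments. Unset Strict Implicit. Unset Printing Implicit Defensive.

(* Binary words are seq bool.  Strings over {0,1,$} are seq (option bool),
   with [Some b] the binary symbol b and [None] the end-marker $. *)

Definition cyc_window (C : seq bool) (k i : nat) : seq bool :=
  take k (drop i (C ++ C)).

Definition debruijn (k : nat) (C : seq bool) : Prop :=
  size C = 2 ^ k /\
  forall w : seq bool, size w = k ->
    count (fun i => cyc_window C k i == w) (iota 0 (2 ^ k)) = 1.

Section Suff.
Variable A : eqType.

Definition substr (x v : seq A) : Prop := infix x v.

Definition right_maximal (v x : seq A) : Prop :=
  exists a b : A, a != b /\ substr (rcons x a) v /\ substr (rcons x b) v.

Definition right_extension (v y : seq A) : Prop :=
  exists (x : seq A) (a : A), y = rcons x a /\ right_maximal v x /\ substr y v.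

Definition suffixient (v : seq A) (S : {set 'I_(size v)}) : Prop :=
  forall y, right_extension v y ->
    exists2 j : 'I_(size v), j \in S & suffix y (take j.+1 v).
End Suff.

Definition w_lin (k : nat) (U : seq bool) : seq bool := U ++ take (k - 1) U.

Definition with_end (w : seq bool) : seq (option bool) := rcons (map Some w) None.

(* Main.v *)
Require Import Defs.
From mathcomp Require Import all_boot zify.

Lemma cyc_rot (C : seq bool) k i : k <= size C -> i < size C -> cyc_window C k i = take k (rot i C).
Proof.
move=> kC iC; rewrite /cyc_window /rot drop_cat iC !take_cat size_drop.
case: ifP => // h; congr (_ ++ _); rewrite take_takel //; lia.
Qed.

Lemma win_rot (U : seq bool) k i : 0 < k -> k <= size U -> i < size U ->
  take k (drop i (U ++ take (k-1) U)) = take k (rot i U).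
Proof.
move=> k0 kU iU; rewrite /rot drop_cat iU !take_cat size_drop.
case: ifP => // h; congr (_ ++ _); rewrite !take_takel //; lia.
Qed.

Lemma exists_win k C r z : 0 < k -> debruijn k C -> size z = k ->
  exists2 i, i < 2^k & take k (drop i (w_lin k (rot r C))) = z.
Proof.
move=> k0 [sC hC] sz.
have: has (fun i => cyc_window C k i == z) (iota 0 (2^k)) by rewrite has_count hC.
case/hasP => i; rewrite mem_iota add0n => /andP[_ ilt] /eqP ei.
have kn : k <= 2^k by apply: ltnW; apply: ltn_expl.
have n0 : 0 < 2^k by rewrite expn_gt0.
rewrite cyc_rot ?sC // in ei.
pose r' := if r < 2^k then r else 0.
have eU : rot r C = rot r' C.
  rewrite /r'; case: ifP => // /negbT; rewrite -leqNgt => h.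
  by rewrite rot0 rot_oversize // sC.
have r'lt : r' < 2^k by rewrite /r'; case: ifP.
rewrite /w_lin eU.
case: (leqP r' i) => h.
  exists (i - r'); first lia.
  rewrite win_rot ?size_rot ?sC //; try lia.
  by rewrite -rotD ?subnK // sC; lia.
exists (i + 2^k - r'); first lia.
rewrite win_rot ?size_rot ?sC //; try lia.
rewrite rot_add_mod ?sC; try lia.
case: ifP => h2.
  have i0 : i = 0 by lia.
  by rewrite -ei i0 (_ : _ + r' = size C) ?rot_size ?rot0 // sC; lia.
by rewrite (_ : _ - _ = i) //; lia.
Qed.

Lemma size_we (w : seq bool) : size (with_end w) = (size w).+1.
Proof. by rewrite /with_end size_rcons size_map. Qed.

Lemma L_bin k n (w : seq bool) : 0 < k -> size w = n + k - 1 ->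
  (forall z, size z = k -> exists2 i, i < n & take k (drop i w) = z) ->
  forall y, size y <= k -> exists j, [/\ k.-1 <= j, j < size (with_end w) &
     suffix (map Some y) (take j.+1 (with_end w))].
Proof.
move=> k0 sw P y sy.
have [i ilt ei] : exists2 i, i < n & take k (drop i w) = nseq (k - size y) false ++ y.
  by apply: P; rewrite size_cat size_nseq subnK.
exists (i + k).-1; split; first lia.
  rewrite size_we; lia.
rewrite (_ : (i + k).-1.+1 = i + k); last lia.
rewrite /with_end -cats1 takel_cat ?size_map; last lia.
by rewrite -map_take takeD ei catA map_cat suffix_suffix.
Qed.

Lemma suf_infix (T : eqType) (y v : seq T) j : suffix y (take j v) -> infix y v.
Proof. by move=> h; apply: (suffix_prefix_trans h); apply: prefix_take. Qed.
Lemma count_ge m a : count (fun j => a <= j) (iota 0 m) = m - a.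
Proof.
case: (leqP a m) => h.
  rewrite -(subnKC h) iotaD count_cat add0n.
  rewrite (eq_in_count (a1:=fun j => a <= j) (a2:=pred0)); last by move=> x; rewrite mem_iota /=; lia.
  rewrite count_pred0 add0n (eq_in_count (a2:=predT)) ?count_predT ?size_iota; last by move=> x; rewrite mem_iota /=; lia.
  by rewrite addKn.
rewrite (eq_in_count (a2:=pred0)) ?count_pred0; first by lia.
by move=> x; rewrite mem_iota /=; lia.
Qed.
Lemma card_ge m a : #|[set j : 'I_m | a <= j]| = m - a.
Proof.
rewrite cardsE cardE /enum_mem -enumT size_filter.
rewrite -count_ge -val_enum_ord count_map. 
by [].
Qed.

Lemma main_abs k (w : seq bool) : 0 < k -> size w = 2^k + k - 1 ->
  (forall z, size z = k -> exists2 i, i < 2^k & take k (drop i w) = z) ->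
  let v := with_end w in
  (exists S : {set 'I_(size v)}, suffixient S /\ #|S| = 2 ^ k + 1) /\
  (forall S : {set 'I_(size v)}, suffixient S -> 2 ^ k + 1 <= #|S|).
Proof.
move=> k0 sw P v; rewrite {}/v.
have Lb := @L_bin k (2^k) w k0 sw P.
have pick : forall (S : {set 'I_(size (with_end w))}) (y : seq (option bool)) j
    (H : j < size (with_end w)), Ordinal H \in S -> suffix y (take j.+1 (with_end w)) ->
    exists2 j' : 'I_(size (with_end w)), j' \in S & suffix y (take j'.+1 (with_end w)).
  by move=> S y j H hS hs; exists (Ordinal H).
split.
  exists [set j : 'I_(size (with_end w)) | k.-1 <= j]; split; last first.
    rewrite card_ge size_we sw; lia.
  move=> y [x [a [ey [rm iy]]]].
  move: iy; rewrite /substr /with_end infix_rconsl -/(with_end w) => /orP[hs|hi].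
    have H : size w < size (with_end w) by rewrite size_we.
    apply: (pick _ _ _ H); first by rewrite inE /=; lia.
    by rewrite -size_we take_size.
  case/infixP: hi => p [q e].
  have y0 : 0 < size y by rewrite ey size_rcons.
  have szw : size w = size p + size y + size q.
    by rewrite -(size_map Some) e !size_cat addnA.
  case: (leqP k (size y)) => hk.
    have H : (size p + size y).-1 < size (with_end w) by rewrite size_we; lia.
    apply: (pick _ _ _ H); first by rewrite inE /= -!subn1 leq_sub2r // (leq_trans hk) // leq_addl.
    rewrite (_ : _.+1 = size (p ++ y)); last by rewrite size_cat; lia.
    rewrite /with_end -cats1 e -!catA catA take_size_cat //.
    exact: suffix_suffix.
  have ey' : y = map Some (take (size y) (drop (size p) w)).
    by rewrite map_take map_drop e drop_size_cat // take_size_cat.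
  have sz : size (take (size y) (drop (size p) w)) <= k.
    by rewrite -(size_map Some) -ey' ltnW.
  have [j [hj1 hj2 hj3]] := Lb _ sz.
  apply: (pick _ _ _ hj2); first by rewrite inE.
  by rewrite ey'.
move=> S hS.
have hbin : forall t : seq bool, size t = k -> exists2 j : 'I_(size (with_end w)),
    j \in S & suffix (map Some t) (take j.+1 (with_end w)).
  move=> t st; apply: hS.
  have : t != [::] by rewrite -size_eq0 st -lt0n.
  case/lastP: t st => [//|t' c] st _.
  have inf : forall b, infix (map Some (rcons t' b)) (with_end w).
    move=> b; have sz : size (rcons t' b) <= k by rewrite size_rcons -st size_rcons.
    have [j [_ _ hj]] := Lb _ sz; exact: suf_infix hj.
  exists (map Some t'), (Some c); split; first by rewrite map_rcons.
  split; last exact: inf.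
  exists (Some false), (Some true); split => //.
  by split; rewrite /substr -map_rcons; exact: inf.
have hnone : exists2 j : 'I_(size (with_end w)), j \in S &
    suffix [:: None] (take j.+1 (with_end w)).
  have iN : infix [:: None] (with_end w).
    by rewrite infix1s /with_end mem_rcons inE.
  apply: hS; exists [::], None; split => //; split => //.
  exists (Some false), None; split => //; split => //.
  have sz : size [:: false] <= k by [].
  have [j [_ _ hj]] := Lb _ sz; exact: suf_infix hj.
pose g := fun j : 'I_(size (with_end w)) => drop (j.+1 - k) (take j.+1 (with_end w)).
have gk : forall j : 'I_(size (with_end w)), forall y, size y = k ->
    suffix y (take j.+1 (with_end w)) -> y = g j.
  by move=> j y sy; rewrite suffixE size_takel // sy => /eqP <-.
have [j0 j0S h0] := hnone.
have g0 : None \in g j0.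
  case/suffixP: h0 => s' e0.
  have ss : size s' = j0.
    have := congr1 size e0; rewrite size_cat size_takel //=; lia.
  rewrite /g e0 drop_cat.
  case: ifP => _; first by rewrite mem_cat inE eqxx orbT.
  rewrite (_ : _ - _ = 0) ?drop0 ?inE //. rewrite ss; lia.
pose l1 := g j0 :: map (fun t : k.-tuple bool => map Some (val t)) (enum {: k.-tuple bool}).
pose l2 := map g (enum S).
have : size l1 <= size l2.
  apply: uniq_leq_size.
    rewrite /l1 /= map_inj_uniq ?enum_uniq ?andbT.
      apply/mapP => -[t _ et]; move: g0; rewrite et => /mapP [c _] //.
    by move=> t1 t2 /(inj_map (@Some_inj _)) /val_inj.
  move=> y; rewrite inE => /orP[/eqP -> | /mapP [t _ ->]].
    by apply: map_f; rewrite mem_enum.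
  have [j jS sj] := hbin t (size_tuple t).
  rewrite (gk j _ _ sj) ?size_map ?size_tuple //; by apply: map_f; rewrite mem_enum.
by rewrite /l1 /l2 /= !size_map -!cardE -enumT -cardT card_tuple card_bool addn1.
Qed.

Theorem lemma4 (k : nat) (C : seq bool) (r : nat) :
  2 <= k -> debruijn k C ->
  let v := with_end (w_lin k (rot r C)) in
  (exists S : {set 'I_(size v)}, suffixient S /\ #|S| = 2 ^ k + 1) /\
  (forall S : {set 'I_(size v)}, suffixient S -> 2 ^ k + 1 <= #|S|).
Proof.
move=> k2 dB.
have k0 : 0 < k by lia.
apply: main_abs => //; last by move=> z sz; apply: exists_win.
case: dB => sC _.
have kn : k <= 2^k by apply: ltnW; apply: ltn_expl.
rewrite /w_lin size_cat size_takel size_rot sC //; lia.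
Qed.
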